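(* Let $\mathcal{D}$ be a distribution over $\mathcal{X}\times\mathcal{Y}$ where $\mathcal{Y}\subseteq\mathbb{R}^d$ and $\|y\|_\infty\le M$ for all $y\in\mathcal{Y}$, let $\alpha>0$, and let $\mathcal{T}$ be a bucketing with width $w=\sqrt{\alpha/M}$. Let $\pi:\mathcal{X}\to\Omega$ be an arbitrary policy and let $h:\mathcal{X}\to\mathcal{Y}$ be an $\alpha$-self-consistent model that is also $\alpha$-consistent with respect to $\pi$. Then \[\mathbb{E}_{\mathcal{D}}[\pi_h(x)\cdot y]\ge \mathbb{E}_{\mathcal{D}}[\pi(x)\cdot y]-4d\sqrt{\alpha M}.\]
   Context: $\Omega\subseteq[0,1]^d$ is an arbitrary feasible set of actions; a policy is a map $\pi:\mathcal{X}\to\Omega$. For a model $h:\mathcal{X}\to\mathcal{Y}$, its induced policy is $\pi_h(x)=\arg\max_{a\in\Omega}a\cdot h(x)$. A bucketing $\mathcal{T}$ of width $w$ is a partition of $[0,1]$ into $1/w$ consecutive intervals $\tau$ of width $w$. A model $h$ is $\alpha$-consistent with respect to a collection $\mathcal{C}\subseteq 2^{\mathcal{X}}$ if for every $C\in\mathcal{C}$, $\|\mathbb{E}_{\mathcal{D}}[y-h(x)\mid x\in C]\|_\infty\le \alpha/\Pr[x\in C]$. The level sets of a policy $\pi$ are $\mathcal{C}^{\mathcal{T}}_\pi=\{\{x:\pi(x)_i\in\tau\}:i\in[d],\tau\in\mathcal{T}\}$. $h$ is $\alpha$-consistent with respect to a policy $\pi$ if it is $\alpha$-consistent with respect to $\mathcal{C}^{\mathcal{T}}_\pi$,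 and $\alpha$-self-consistent if it is $\alpha$-consistent with respect to $\pi_h$. *)

(* Defs.v *)
From HB Require Import structures.
From mathcomp Require Import all_boot all_order all_algebra.
From mathcomp Require Import all_classical all_reals all_analysis.
Set Implicit Arguments. Unset Strict Implicit. Unset Printing Implicit Defensive.
Import Order.TTheory GRing.Theory Num.Theory.
Local Open Scope classical_set_scope.
Local Open Scope ring_scope.

Section Defs.
Context {R : realType}.

Definition dotv (d : nat) (u v : 'rV[R]_d) : R := \sum_(i < d) u 0 i * v 0 i.

Definition supnorm_le (d : nat) (v : 'rV[R]_d) (M : R) : Prop :=
  forall i : 'I_d, `|v 0 i| <= M.

(* a bucketing of width w: a partition of [0,1] into k = 1/w consecutive
   intervals tau_0, ..., tau_{k-1}, tau_j having endpoints j*w and (j+1)*w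
   (endpoint membership is left arbitrary, as in the paper) *)
Definition is_bucketing (w : R) (k : nat) (tau : 'I_k -> set R) : Prop :=
  [/\ k%:R * w = 1,
      (forall j : 'I_k, tau j `<=` `[(j%:R * w), (j.+1%:R * w)]%classic),
      (forall j j' : 'I_k, j != j' -> tau j `&` tau j' = set0) &
      \bigcup_(j in [set: 'I_k]) tau j = `[0, 1]%classic].

Definition induced_policy {X : Type} (d : nat) (Omega : set 'rV[R]_d)
  (h : X -> 'rV[R]_d) (ph : X -> 'rV[R]_d) : Prop :=
  forall x, Omega (ph x) /\ forall a, Omega a -> dotv a (h x) <= dotv (ph x) (h x).

Context {dS dX : measure_display} {S : measurableType dS} {X : measurableType dX}.

(* The distribution D over X x Y is the joint law of (xs, ys) under P. *)
(* alpha-consistency of h on C (a subset of X):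
   for all coordinates i, |E[y_i - h(x)_i | x in C]| <= alpha / Pr[x in C]
   (the conditional expectation is only defined when Pr[x in C] > 0). *)
Definition consistent_on (P : probability S R) (d : nat) (xs : S -> X)
  (ys : S -> 'rV[R]_d) (h : X -> 'rV[R]_d) (alpha : R) (C : set X) : Prop :=
  let E := xs @^-1` C in
  let pC := fine (P E) in
  0 < pC ->
  forall i : 'I_d,
    `| Rintegral P E (fun s => ys s 0 i - h (xs s) 0 i) / pC | <= alpha / pC.

Definition consistent_wrt_policy (P : probability S R) (d : nat) (xs : S -> X)
  (ys : S -> 'rV[R]_d) (h : X -> 'rV[R]_d) (alpha : R) (k : nat)
  (tau : 'I_k -> set R) (pi : X -> 'rV[R]_d) : Prop :=
  forall (i : 'I_d) (j : 'I_k),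
    consistent_on P xs ys h alpha [set x | tau j (pi x 0 i)].

Definition payoff (P : probability S R) (d : nat) (xs : S -> X)
  (ys : S -> 'rV[R]_d) (pi : X -> 'rV[R]_d) : R :=
  Rintegral P setT (fun s => dotv (pi (xs s)) (ys s)).

End Defs.

(* Main.v *)
Require Import Defs.
From HB Require Import structures.
From mathcomp Require Import all_boot all_order all_algebra.
From mathcomp Require Import all_classical all_reals all_analysis.
From mathcomp Require Import ring lra.
Import Order.TTheory GRing.Theory Num.Theory.
Import numFieldNormedType.Exports.
Local Open Scope classical_set_scope.
Local Open Scope ring_scope.

Definition BM {d} {T : measurableType d} {R : realType} (f : T -> R) :=
  measurable_fun setT f /\ exists B : R, forall s, `|f s| <= B.

Lemma BM_int d (T : measurableType d) (R : realType) (P : probability T R)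
  (f : T -> R) : BM f -> P.-integrable setT (EFin \o f).
Proof.
move=> [mf [B hB]]; apply: measurable_bounded_integrable => //.
  by apply: (le_lt_trans (probability_le1 P measurableT)); rewrite ltry.
exists B; split; first by rewrite num_real.
move=> M hM x _ /=; apply: le_trans (hB x) _; exact: ltW.
Qed.

Lemma BM_cst d (T : measurableType d) (R : realType) (c : R) :
  BM (fun _ : T => c).
Proof. split; first exact: measurable_cst. by exists `|c|. Qed.

Lemma BM_add d (T : measurableType d) (R : realType) (f g : T -> R) :
  BM f -> BM g -> BM (fun s => f s + g s).
Proof.
move=> [mf [B1 h1]] [mg [B2 h2]]; split.
  exact: measurable_realfun.measurable_funD.
exists (B1 + B2) => s; apply: le_trans (ler_normD _ _) _; exact: lerD.
Qed.

Lemma BM_opp d (T : measurableType d) (R : realType) (f : T -> R) :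
  BM f -> BM (fun s => - f s).
Proof.
move=> [mf [B1 h1]]; split.
  exact: measurableT_comp.
by exists B1 => s; rewrite normrN.
Qed.

Lemma BM_sub d (T : measurableType d) (R : realType) (f g : T -> R) :
  BM f -> BM g -> BM (fun s => f s - g s).
Proof. by move=> hf hg; apply: BM_add => //; apply: BM_opp. Qed.

Lemma BM_mul d (T : measurableType d) (R : realType) (f g : T -> R) :
  BM f -> BM g -> BM (fun s => f s * g s).
Proof.
move=> [mf [B1 h1]] [mg [B2 h2]]; split.
  exact: measurable_realfun.measurable_funM.
exists (B1 * B2) => s; rewrite normrM; apply: ler_pM => //.
Qed.

Lemma BM_restrict d (T : measurableType d) (R : realType) (f : T -> R) (E : set T) :
  measurable E -> BM f -> BM (f \_ E).
Proof.
move=> mE [mf [B h]]; split.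
  apply/(measurable_restrictT _ mE); exact: measurable_funS mf.
exists B => s; rewrite /patch; case: ifP => _ //.
by rewrite normr0; apply: le_trans (h s).
Qed.

Lemma BM_sum d (T : measurableType d) (R : realType) (I : Type) (s : seq I)
  (f : I -> T -> R) : (forall j, BM (f j)) -> BM (fun x => \sum_(j <- s) f j x).
Proof.
move=> hf; elim: s => [|a s ih].
  under eq_fun do rewrite big_nil; exact: BM_cst.
under eq_fun do rewrite big_cons; exact: BM_add.
Qed.

Lemma Rint_sum d (T : measurableType d) (R : realType) (P : probability T R)
  (I : Type) (s : seq I) (f : I -> T -> R) : (forall j, BM (f j)) ->
  \int[P]_x (\sum_(j <- s) f j x) = \sum_(j <- s) \int[P]_x f j x.
Proof.
move=> hf; elim: s => [|a s ih].
  under eq_Rintegral do rewrite big_nil.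
  by rewrite big_nil Rintegral_cst // mul0r.
under eq_Rintegral do rewrite big_cons.
rewrite big_cons RintegralD //; first by rewrite ih.
  exact: BM_int.
by apply: BM_int; apply: BM_sum.
Qed.

Lemma test d (T : measurableType d) (R : realType) (P : probability T R) n (f : 'I_n -> T -> R) :
  (forall j, BM (f j)) -> \int[P]_x (\sum_(j < n) f j x) = \sum_(j < n) \int[P]_x f j x.
Proof. move=> h; exact: Rint_sum. Qed.

Lemma BM_norm d (T : measurableType d) (R : realType) (f : T -> R) :
  BM f -> BM (fun s => `|f s|).
Proof.
move=> [mf [B h]]; split; first exact: measurableT_comp.
by exists B => s; rewrite normr_id.
Qed.

Set Implicit Arguments. Unset Strict Implicit.

Section B.
Lemma bk_cover (R : realType) (w : R) k (tau : 'I_k -> set R) :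
  is_bucketing w tau -> forall r, 0 <= r <= 1 -> exists j, tau j r.
Proof.
move=> [_ _ _ hU] r hr.
have : (\bigcup_(j in [set: 'I_k]) tau j) r.
  by rewrite hU /= in_itv /=.
by move=> [j _ hj]; exists j.
Qed.

Lemma bk_itv (R : realType) (w : R) k (tau : 'I_k -> set R) :
  is_bucketing w tau -> forall j r, tau j r -> j%:R * w <= r <= j.+1%:R * w.
Proof.
move=> [_ hs _ _] j r /hs /=; by rewrite in_itv /=.
Qed.

Lemma bk_uniq (R : realType) (w : R) k (tau : 'I_k -> set R) :
  is_bucketing w tau -> forall j j' r, tau j r -> tau j' r -> j = j'.
Proof.
move=> [_ _ hd _] j j' r h1 h2; apply/eqP; apply/negP => /negP /hd hjj.
have : (tau j `&` tau j') r by [].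
by rewrite hjj.
Qed.

Lemma sub_set1_meas (R : realType) (A : set R) (a : R) :
  measurable (A `&` [set a]).
Proof.
case: (pselect (A a)) => h.
  have -> : A `&` [set a] = [set a].
    by apply/seteqP; split => x /=; [case=> _ -> | move=> ->].
  exact: measurable_set1.
have -> : A `&` [set a] = set0.
  by apply/seteqP; split => x //= [hx hxa]; apply: h; rewrite -hxa.
exact: measurable0.
Qed.

Lemma bk_meas (R : realType) (w : R) k (tau : 'I_k -> set R) :
  0 < w -> is_bucketing w tau -> forall j, measurable (tau j).
Proof.
move=> w0 hb j.
have [hk _ _ _] := hb.
set a := j%:R * w; set b := j.+1%:R * w.
have hin : forall r, a < r < b -> tau j r.
  move=> r /andP[ar rb].
  have a0 : 0 <= a by rewrite /a mulr_ge0 // ltW.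
  have b1 : b <= 1.
    rewrite -hk /b ler_pM2r // ler_nat; exact: ltn_ord.
  have r01 : 0 <= r <= 1.
    by rewrite (ltW (le_lt_trans a0 ar)) (ltW (lt_le_trans rb b1)).
  have [j' hj'] := bk_cover hb r01.
  have -> // : j = j'.
    have /andP[l1 l2] := bk_itv hb hj'.
    apply/val_inj/eqP; rewrite eqn_leq; apply/andP; split.
      rewrite leqNgt; apply/negP => hlt.
      have : j'.+1%:R * w <= a by rewrite /a ler_pM2r // ler_nat.
      by move=> h; have := lt_le_trans (le_lt_trans h ar) l2; rewrite ltxx.
    rewrite leqNgt; apply/negP => hlt.
    have : b <= j'%:R * w by rewrite /b ler_pM2r // ler_nat.
    by move=> h; have := lt_le_trans rb (le_trans h l1); rewrite ltxx.
have -> : tau j = `]a, b[%classic `|` (tau j `&` [set a]) `|` (tau j `&` [set b]).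
  apply/seteqP; split => r.
    move=> hr; have /andP[l1 l2] := bk_itv hb hr.
    rewrite /setU /setI /=.
    case: (eqVneq r a) => [ra|ra]; first by left; right; rewrite -ra.
    case: (eqVneq r b) => [rb'|rb]; first by right; rewrite -rb'.
    left; left; rewrite in_itv /=.
    by rewrite lt_neqAle eq_sym ra l1 lt_neqAle rb l2.
  rewrite /setU /setI /=.
  case=> [[|[]//]|[]//].
  by move=> /= h; apply: hin; move: h; rewrite in_itv.
apply: measurableU; last exact: sub_set1_meas.
apply: measurableU; last exact: sub_set1_meas.
exact: measurable_itv.
Qed.
End B.

Lemma cell_bound (R : realType) dS (S : measurableType dS) (P : probability S R)
  (g : S -> R) (alpha : R) (E : set S) :
  0 < alpha -> measurable E -> BM g ->
  (0 < fine (P E) -> `|Rintegral P E g / fine (P E)| <= alpha / fine (P E)) ->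
  `|Rintegral P E g| <= alpha.
Proof.
move=> a0 mE [mg _] hc.
have p0 : 0 <= fine (P E) by apply: fine_ge0.
move: p0; rewrite le_eqVlt => /orP[/eqP p0|p0].
  have PE : P E = 0%E.
    have := fin_num_measure P E mE => hf.
    by rewrite -(fineK hf) -p0.
  rewrite /Rintegral null_set_integral //= ?normr0 ?ltW //.
  apply/measurable_realfun.measurable_EFinP; exact: measurable_funS mg.
have pi0 : 0 < (fine (P E))^-1 by rewrite invr_gt0.
move: (hc p0); rewrite normrM (ger0_norm (ltW pi0)).
by rewrite ler_pM2r.
Qed.

Lemma coord_bound (R : realType) dS (S : measurableType dS) (P : probability S R)
  (g qq : S -> R) (alpha w M : R) k (tau : 'I_k -> set R) :
  0 < w -> 0 < M -> alpha = w ^+ 2 * M -> is_bucketing w tau ->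
  BM g -> (forall s, `|g s| <= 2 * M) ->
  measurable_fun setT qq -> (forall s, 0 <= qq s <= 1) ->
  (forall j, let E := [set s | tau j (qq s)] in
     0 < fine (P E) -> `|Rintegral P E g / fine (P E)| <= alpha / fine (P E)) ->
  `| \int[P]_s (qq s * g s) | <= 2 * (w * M).
Proof.
move=> w0 M0 ha hb bg gM mq q01 hc.
have a0 : 0 < alpha by rewrite ha mulr_gt0 // exprn_gt0.
have [hk _ _ _] := hb.
pose E j := [set s | tau j (qq s)].
have mE : forall j, measurable (E j).
  move=> j; have := mq measurableT _ (bk_meas w0 hb j); by rewrite setTI.
have cellb : forall j, `|Rintegral P (E j) g| <= alpha.
  move=> j; apply: cell_bound => //; exact: hc.
have bq : BM qq.
  split => //; exists 1 => s; have /andP[l1 l2] := q01 s.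
  by rewrite ger0_norm.
pose m (j : 'I_k) := (j%:R + 2^-1) * w.
pose F s := \sum_(j < k) m j * (g \_ (E j)) s.
have bF : BM F.
  apply: BM_sum => j; apply: BM_mul; first exact: BM_cst.
  exact: BM_restrict.
have bqg : BM (fun s => qq s * g s) by apply: BM_mul.
have pw : forall s, `|qq s * g s - F s| <= w * M.
  move=> s; have [j0 hj0] := bk_cover hb (q01 s).
  have -> : F s = m j0 * g s.
    rewrite /F (bigD1 j0) //= big1 ?addr0.
      by rewrite /patch mem_set.
    move=> j hj; rewrite /patch ifF ?mulr0 //.
    apply/negP => /set_mem hE.
    by move: hj; rewrite (bk_uniq hb hE hj0) eqxx.
  rewrite -mulrBl normrM.
  have : `|qq s - m j0| <= w / 2.
    have /andP[l1 l2] := bk_itv hb hj0.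
    move: l1 l2; rewrite /m -natr1 !mulrDl mul1r => l1 l2.
    rewrite ler_norml; apply/andP; split; lra.
  move=> hm.
  have -> : w * M = (w / 2) * (2 * M) by field.
  by apply: ler_pM.
have e1 : `|\int[P]_s (qq s * g s - F s)| <= w * M.
  have bd : BM (fun s => qq s * g s - F s) by apply: BM_sub.
  have := le_normr_Rintegral measurableT (@BM_int _ _ _ P _ bd).
  move/le_trans; apply.
  have : \int[P]_s `|qq s * g s - F s| <= \int[P]_s (w * M).
    apply: le_Rintegral => //.
    - by apply: BM_int; apply: BM_norm; apply: BM_sub.
    - by apply: BM_int; apply: BM_cst.
  move/le_trans; apply.
  rewrite Rintegral_cst // (_ : fine (P setT) = 1) ?mulr1 //.
  exact: (congr1 fine (probability_setT P)).
have e2 : `|\int[P]_s F s| <= w * M.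
  rewrite /F Rint_sum; last first.
    move=> j; apply: BM_mul; first exact: BM_cst.
    exact: BM_restrict.
  apply: le_trans (ler_norm_sum _ _ _) _.
  apply: le_trans (_ : \sum_(j < k) alpha <= _).
    apply: ler_sum => j _.
    rewrite RintegralZl //; last by apply: BM_int; apply: BM_restrict.
    rewrite -Rintegral_mkcond normrM.
    rewrite -[alpha]mul1r; apply: ler_pM => //.
    rewrite ger0_norm /m; last by rewrite mulr_ge0 // ?ltW // addr_ge0.
    rewrite -[X in _ <= X]hk ler_pM2r //.
    have : j.+1%:R <= k%:R :> R by rewrite ler_nat.
    rewrite -natr1; lra.
  rewrite sumr_const card_ord -mulr_natl ha.
  rewrite (_ : k%:R * (w ^+ 2 * M) = (k%:R * w) * (w * M)); first by rewrite hk mul1r.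
  by rewrite expr2; ring.
have -> : \int[P]_s (qq s * g s) = \int[P]_s F s + \int[P]_s (qq s * g s - F s).
  rewrite RintegralB //; first ring.
    exact: BM_int.
  exact: BM_int.
apply: le_trans (ler_normD _ _) _.
rewrite mulr2n; lra.
Qed.

Lemma policy_bound (R : realType) (dS dX : measure_display)
  (S : measurableType dS) (X : measurableType dX) (P : probability S R)
  (d : nat) (xs : S -> X) (ys : S -> 'rV[R]_d)
  (Y : set 'rV[R]_d) (M alpha w : R) (k : nat) (tau : 'I_k -> set R)
  (h q : X -> 'rV[R]_d) :
  0 < w -> 0 < M -> alpha = w ^+ 2 * M -> is_bucketing w tau ->
  (forall v, Y v -> supnorm_le v M) ->
  measurable_fun setT xs ->
  (forall i : 'I_d, measurable_fun setT (fun s => ys s 0 i)) ->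
  (forall s, Y (ys s)) ->
  (forall x, Y (h x)) ->
  (forall i : 'I_d, measurable_fun setT (fun x => h x 0 i)) ->
  (forall x (i : 'I_d), 0 <= q x 0 i <= 1) ->
  (forall i : 'I_d, measurable_fun setT (fun x => q x 0 i)) ->
  consistent_wrt_policy P xs ys h alpha tau q ->
  `| payoff P xs ys q - \int[P]_s dotv (q (xs s)) (h (xs s)) |
     <= d%:R * (2 * (w * M)).
Proof.
move=> w0 M0 ha hb hY mxs mys Yys Yh mh q01 mq hc.
have by_ : forall i, BM (fun s => ys s 0 i).
  by move=> i; split => //; exists M => s; exact: (hY _ (Yys s) i).
have bh : forall i, BM (fun s => h (xs s) 0 i).
  move=> i; split; first exact: (measurableT_comp (mh i) mxs).
  by exists M => s; exact: (hY _ (Yh _) i).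
have bq : forall i, BM (fun s => q (xs s) 0 i).
  move=> i; split; first exact: (measurableT_comp (mq i) mxs).
  exists 1 => s; have /andP[l1 l2] := q01 (xs s) i; by rewrite ger0_norm.
have bdy : BM (fun s => dotv (q (xs s)) (ys s)).
  by apply: BM_sum => i; apply: BM_mul.
have bdh : BM (fun s => dotv (q (xs s)) (h (xs s))).
  by apply: BM_sum => i; apply: BM_mul.
rewrite /payoff -RintegralB //; try exact: BM_int.
have -> : \int[P]_s (dotv (q (xs s)) (ys s) - dotv (q (xs s)) (h (xs s))) =
  \int[P]_s (\sum_(i < d) (q (xs s) 0 i * (ys s 0 i - h (xs s) 0 i))).
  by apply: eq_Rintegral => s _; rewrite /dotv -sumrB; apply: eq_bigr => i _; rewrite mulrBr.
have -> : \int[P]_s (\sum_(i < d) (q (xs s) 0 i * (ys s 0 i - h (xs s) 0 i))) =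
  \sum_(i < d) \int[P]_s (q (xs s) 0 i * (ys s 0 i - h (xs s) 0 i)).
  apply: (@Rint_sum _ _ _ P _ _ (fun i s => q (xs s) 0 i * (ys s 0 i - h (xs s) 0 i))).
  by move=> i; apply: BM_mul => //; apply: BM_sub.
apply: le_trans (ler_norm_sum _ _ _) _.
have -> : d%:R * (2 * (w * M)) = \sum_(i < d) (2 * (w * M)).
  by rewrite sumr_const card_ord mulr_natl.
apply: ler_sum => i _.
apply: (coord_bound (tau := tau) (alpha := alpha)) => //.
- by apply: BM_sub.
- move=> s; apply: le_trans (ler_normB _ _) _.
  by rewrite mulr2n mulrDl mul1r; apply: lerD; [exact: (hY _ (Yys s) i)|exact: (hY _ (Yh _) i)].
- exact: (measurableT_comp (mq i) mxs).
- by move=> j E hp; apply: (hc i j hp i).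
Qed.

Unset Implicit Arguments. Set Strict Implicit.

Theorem lemma4 (R : realType) (dS dX : measure_display)
  (S : measurableType dS) (X : measurableType dX) (P : probability S R)
  (d : nat) (xs : S -> X) (ys : S -> 'rV[R]_d)
  (Y : set 'rV[R]_d) (M alpha : R) (Omega : set 'rV[R]_d)
  (k : nat) (tau : 'I_k -> set R)
  (pi h ph : X -> 'rV[R]_d) :
  0 < M -> 0 < alpha ->
  (forall v, Y v -> supnorm_le v M) ->
  measurable_fun setT xs ->
  (forall i : 'I_d, measurable_fun setT (fun s => ys s 0 i)) ->
  (forall s, Y (ys s)) ->
  (forall a, Omega a -> forall i : 'I_d, 0 <= a 0 i <= 1) ->
  is_bucketing (Num.sqrt (alpha / M)) tau ->
  (forall x, Omega (pi x)) ->
  (forall i : 'I_d, measurable_fun setT (fun x => pi x 0 i)) ->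
  (forall x, Y (h x)) ->
  (forall i : 'I_d, measurable_fun setT (fun x => h x 0 i)) ->
  induced_policy Omega h ph ->
  (forall i : 'I_d, measurable_fun setT (fun x => ph x 0 i)) ->
  consistent_wrt_policy P xs ys h alpha tau ph ->
  consistent_wrt_policy P xs ys h alpha tau pi ->
  payoff P xs ys ph >= payoff P xs ys pi - 4 * d%:R * Num.sqrt (alpha * M).
Proof.
move=> M0 a0 hY mxs mys Yys hO hb Opi mpi Yh mh hind mph cph cpi.
set w := Num.sqrt (alpha / M) in hb.
have w0 : 0 < w by rewrite sqrtr_gt0 divr_gt0.
have ha : alpha = w ^+ 2 * M.
  by rewrite sqr_sqrtr ?divfK ?gt_eqF // ltW // divr_gt0.
have hs : Num.sqrt (alpha * M) = w * M.
  rewrite ha (_ : w ^+ 2 * M * M = (w * M) ^+ 2); last by rewrite !expr2; ring.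
  by rewrite sqrtr_sqr ger0_norm // mulr_ge0 // ltW.
have q01 : forall (q : X -> 'rV[R]_d), (forall x, Omega (q x)) ->
    forall x (i : 'I_d), 0 <= q x 0 i <= 1.
  by move=> q hq x i; apply: hO.
have e1 := policy_bound w0 M0 ha hb hY mxs mys Yys Yh mh (q01 _ (fun x => (hind x).1)) mph cph.
have e2 := policy_bound w0 M0 ha hb hY mxs mys Yys Yh mh (q01 _ Opi) mpi cpi.
have hmono : \int[P]_s dotv (pi (xs s)) (h (xs s)) <= \int[P]_s dotv (ph (xs s)) (h (xs s)).
  have bdot : forall q : X -> 'rV[R]_d, (forall i : 'I_d, measurable_fun setT (fun x => q x 0 i)) ->
      (forall x (i : 'I_d), 0 <= q x 0 i <= 1) ->
      BM (fun s => dotv (q (xs s)) (h (xs s))).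
    move=> q mq hq; apply: BM_sum => i; apply: BM_mul.
      split; first exact: (measurableT_comp (mq i) mxs).
      exists 1 => s; have /andP[l1 l2] := hq (xs s) i; by rewrite ger0_norm.
    split; first exact: (measurableT_comp (mh i) mxs).
    by exists M => s; exact: (hY _ (Yh _) i).
  apply: le_Rintegral => //.
  - by apply: BM_int; apply: bdot => //; apply: q01.
  - by apply: BM_int; apply: bdot => //; apply: (q01 _ (fun x => (hind x).1)).
  - by move=> s _; apply: (hind (xs s)).2.
move: e1 e2; rewrite hs !ler_norml => /andP[e1 e1'] /andP[e2 e2'].
lra.
Qed.
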